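(* Let $n$ be a positive integer such that $2^n-1\geq 7$ is a prime. Then for every $a\in\mathbb{F}_2$ there exists a primitive element $\alpha\in\mathbb{F}_{2^n}$ such that $\alpha+\alpha^{-1}$ is also primitive and $\mathrm{Tr}_{\mathbb{F}_{2^n}|\mathbb{F}_2}(\alpha)=a$.
   Context: A primitive element of $\mathbb{F}_{2^n}$ is a generator of $\mathbb{F}_{2^n}^*$. $\mathrm{Tr}_{\mathbb{F}_{2^n}|\mathbb{F}_2}(\alpha)=\alpha+\alpha^2+\cdots+\alpha^{2^{n-1}}$. *)

(* Defs.v *)
From mathcomp Require Import all_boot all_order all_algebra all_field.
Set Implicit Arguments. Unset Strict Implicit. Unset Printing Implicit Defensive.
Import GRing.Theory.
Local Open Scope ring_scope.

Definition primitive_elt (F : finFieldType) (x : F) : Prop :=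
  x != 0 /\ forall y : F, y != 0 -> exists k : nat, y = x ^+ k.

Definition trace2 (F : finFieldType) (n : nat) (x : F) : F :=
  \sum_(i < n) x ^+ (2 ^ i).

(* Main.v *)
Require Import Defs.
From mathcomp Require Import all_boot all_order all_algebra all_field.
From mathcomp Require Import ring zify.
Set Implicit Arguments. Unset Strict Implicit. Unset Printing Implicit Defensive.
Import GRing.Theory.
Local Open Scope ring_scope.

Section S.
Variables (F : finFieldType) (p : nat).
Hypothesis hp : prime p.
Hypothesis hF : #|F| = p.+1.

Lemma unit_pow (x : F) : x != 0 -> x ^+ p = 1.
Proof.
move=> x0; apply: (mulIf x0); rewrite mul1r -exprSr -hF.
exact: expf_card.
Qed.

Lemma prim_root_of (x : F) : x != 0 -> x != 1 -> p.-primitive_root x.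
Proof.
move=> x0 x1.
have [m pm mp] := prim_order_exists (prime_gt0 hp) (unit_pow x0).
case/primeP: hp => _ /(_ m mp) /orP[/eqP m1|/eqP mp']; last by rewrite -mp'.
move: (prim_expr_order pm); rewrite m1 expr1 => /eqP; by rewrite (negbTE x1).
Qed.

Lemma primitive_of (x : F) : x != 0 -> x != 1 -> primitive_elt x.
Proof.
move=> x0 x1; split=> // y y0.
have [i ->] := prim_rootP (prim_root_of x0 x1) (unit_pow y0).
by exists i.
Qed.

Lemma prim_pow_ne1 (x : F) k : x != 0 -> x != 1 -> (0 < k < p)%N -> x ^+ k != 1.
Proof.
move=> x0 x1 /andP[k0 kp].
rewrite -(prim_order_dvd (prim_root_of x0 x1)).
apply/negP => /(dvdn_leq k0); by rewrite leqNgt kp.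
Qed.
End S.

Section T.
Variables (F : finFieldType) (m : nat).
Hypothesis hF : #|F| = (2 ^ m.+1)%N.

Lemma ch2 : 2 \in [pchar F].
Proof. exact: (card_finPcharP hF). Qed.

Lemma trace_idem (x : F) : trace2 m.+1 x ^+ 2 = trace2 m.+1 x.
Proof.
rewrite /trace2 -(pFrobenius_autE ch2) rmorph_sum /=.
under eq_bigr => i _ do rewrite pFrobenius_autE -exprM -expnSr.
rewrite big_ord_recr /= -hF expf_card [in RHS]big_ord_recl /= expn0 expr1 addrC.
by [].
Qed.

Lemma trace_roots (c : F) : (#|[set x : F | trace2 m.+1 x == c]| <= 2 ^ m)%N.
Proof.
pose Q : {poly F} := \sum_(i < m) 'X^(2 ^ i) - c%:P.
pose P : {poly F} := 'X^(2 ^ m) + Q.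
have hQ : (size Q <= 2 ^ m)%N.
  apply: (leq_trans (size_add _ _)); rewrite geq_max size_opp.
  apply/andP; split; last first.
    by apply: (leq_trans (size_polyC_leq1 _)); rewrite expn_gt0.
  apply: (leq_trans (size_sum _ _ _)); apply/bigmax_leqP => i _.
  by rewrite size_polyXn ltn_exp2l.
have sP : size P = (2 ^ m).+1.
  by rewrite /P size_addl size_polyXn // ltnS.
have P0 : P != 0 by rewrite -size_poly_eq0 sP.
have hev x : P.[x] = trace2 m.+1 x - c.
  rewrite /P /Q /trace2 big_ord_recr /= !hornerE horner_sum.
  rewrite (eq_bigr (fun i : ordinal m => x ^+ (2 ^ i))); last by move=> i _; rewrite hornerXn.
  by rewrite [_ + x ^+ _]addrC.
have := max_poly_roots P0 (rs := enum [set x : F | trace2 m.+1 x == c]).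
rewrite enum_uniq sP -cardE ltnS; apply; last by [].
apply/allP => x; rewrite mem_enum inE => /eqP hx.
by rewrite /root hev hx subrr.
Qed.
End T.

Theorem lemma6p1 (n : nat) (F : finFieldType) (hF : #|F| = (2 ^ n)%N)
  (hn : (0 < n)%N) (hp : prime (2 ^ n - 1)) (h7 : (7 <= 2 ^ n - 1)%N) :
  forall a : bool, exists alpha : F,
    [/\ primitive_elt alpha, primitive_elt (alpha + alpha^-1)
      & trace2 n alpha = (nat_of_bool a)%:R].
Proof.
move=> a.
case: n hn hF hp h7 => // m _ hF hp h7.
set p := (2 ^ m.+1 - 1)%N in hp h7.
have hFp : #|F| = p.+1 by rewrite hF /p; have := expn_gt0 2 m.+1; lia.
have h4 : (4 <= 2 ^ m)%N by move: h7; rewrite /p expnS; lia.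
have tv (x : F) : trace2 m.+1 x = 0 \/ trace2 m.+1 x = 1.
  have := @trace_idem F m hF x; set t := trace2 _ _ => ht.
  have : t * (t - 1) = 0 by rewrite mulrBr mulr1 -expr2 ht subrr.
  by move/eqP; rewrite mulf_eq0 => /orP[/eqP|]; [left | rewrite subr_eq0 => /eqP; right].
pose S (c : F) := [set x : F | trace2 m.+1 x == c].
have hU : (#|F| <= #|S 0%R| + #|S 1%R|)%N.
  rewrite -cardsT; apply: leq_trans (leq_card_setU _ _).
  apply: subset_leq_card; apply/subsetP => x _.
  by rewrite !inE; case: (tv x) => ->; rewrite eqxx ?orbT.
have hS0 : (#|S 0%R| <= 2^m)%N := @trace_roots F m 0.
have hS1 : (#|S 1%R| <= 2^m)%N := @trace_roots F m 1.
have hSa : (3 <= #|S (nat_of_bool a)%:R%R|)%N.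
  move: hU; rewrite hF expnS; case: a; rewrite /= ?mulr0n ?mulr1n => H; set s0 := #|S 0%R| in H hS0 *; set s1 := #|S 1%R| in H hS1 *; lia.
have [x Sx x01] : exists2 x, x \in S (nat_of_bool a)%:R & x \notin [set 0; 1].
  apply/subsetPn; apply/negP => /subset_leq_card.
  rewrite cards2 => H.
  have : (#|S (nat_of_bool a)%:R| <= 2)%N by apply: leq_trans H _; case: (_ != _).
  by rewrite leqNgt hSa.
move: Sx x01; rewrite !inE negb_or => /eqP tx /andP[x0 x1].
exists x; split => //.
  exact: (@primitive_of F p hp hFp).
have x2 : x ^+ 2 != 1 by apply: (@prim_pow_ne1 F p hp hFp x 2 x0 x1); apply/andP; split=> //; lia.
have x3 : x ^+ 3 != 1 by apply: (@prim_pow_ne1 F p hp hFp x 3 x0 x1); apply/andP; split=> //; lia.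
have c2 : (2 : F) = 0 by apply/eqP; move: (@ch2 F m hF) => /andP[].
have xi : x * x^-1 = 1 by rewrite mulfV.
apply: (@primitive_of F p hp hFp).
  apply: contra x2 => /eqP s0; apply/eqP.
  have : x * (x + x^-1) = 0 by rewrite s0 mulr0.
  rewrite mulrDr xi => e.
  rewrite expr2; transitivity (x * x + 1 + 1 - 2); first by ring.
  by rewrite e c2 add0r subr0.
apply: contra x3 => /eqP s1; apply/eqP.
have : x * (x + x^-1) = x by rewrite s1 mulr1.
rewrite mulrDr xi => e.
apply/eqP; rewrite -subr_eq0; apply/eqP.
transitivity ((x - 1) * (x * x + 1 - x) + 2 * x * (x - 1)); first by ring.
by rewrite e c2 subrr !mul0r mulr0 addr0.
Qed.
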